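(* Let $P_a,P_b,P_c,P_d$ be $n$-qubit Pauli strings with $P_a,P_b$ anticommuting. For $u,v$ let $\alpha_{uv}\in\{0,1\}$ equal $1$ iff $P_u$ and $P_v$ anticommute. Define $\beta\in\{0,1\}$ by $\beta=1$ iff $(\alpha_{ac},\alpha_{bc})\neq(0,0)$, $(\alpha_{ad},\alpha_{bd})\neq(0,0)$ and $(\alpha_{ac},\alpha_{bc})\neq(\alpha_{ad},\alpha_{bd})$. Let $C'$ be any Clifford circuit and $q$ any qubit such that $C'P_aC'^\dagger$ and $C'P_bC'^\dagger$ act non-trivially only on qubit $q$, and write $C'P_xC'^\dagger=\lambda_x\,\tau_x\otimes R_x$ for $x\in\{c,d\}$ as the factor on qubit $q$ tensored with the factor on the other qubits. Then $R_c$ and $R_d$ anticommute if and only if $\alpha_{cd}\oplus\beta=1$ (equivalently, iff $(\alpha_{ac},\alpha_{bc},\alpha_{ad},\alpha_{bd},\alpha_{cd})$ is one of the 16 tuples $(0,0,0,0,1),(0,0,0,1,1),(0,0,1,0,1),(0,0,1,1,1),(0,1,0,0,1),(0,1,0,1,1),(0,1,1,0,0),(0,1,1,1,0),(1,0,0,0,1),(1,0,0,1,0),(1,0,1,0,1),(1,0,1,1,0),(1,1,0,0,1),(1,1,0,1,0),(1,1,1,0,0),(1,1,1,1,1)$). Moreover, in that case there exists a Clifford circuit $C$ and two qubits $q_1\neq q_2$ such that each of $CP_aC^\dagger, CP_bC^\dagger, CP_cC^\dagger, CP_dC^\dagger$ acts non-trivially only on qubits in $\{q_1,q_2\}$.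
   Context: An $n$-qubit Pauli string is $\lambda\,\sigma_1\otimes\cdots\otimes\sigma_n$ with $\sigma_i\in\{I,X,Y,Z\}$, $\lambda\in\{\pm1,\pm i\}$; it acts non-trivially on qubit $i$ if $\sigma_i\neq I$. A Clifford circuit is a unitary generated by $H$, $S$, CNOT; conjugation by it maps Pauli strings to Pauli strings and preserves commutation relations. $\oplus$ denotes XOR. (Standard fact available: any two anticommuting Pauli strings can be simultaneously conjugated by some Clifford circuit to act non-trivially on a single common qubit, and $n\ge 2$ is assumed.) *)

(* Defs.v *)
From mathcomp Require Import all_boot all_order all_algebra.
Set Implicit Arguments. Unset Strict Implicit. Unset Printing Implicit Defensive.
Import GRing.Theory.
Local Open Scope ring_scope.

(* A Pauli string on n qubits, encoded as (k, x, z) meaning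
   i^k * (X^{x_0} Z^{z_0}) (x) ... (x) (X^{x_{n-1}} Z^{z_{n-1}}).
   Every lambda * sigma_1 (x) ... (x) sigma_n with lambda in {+-1,+-i} has a
   unique such encoding (Y = i X Z). *)
Definition Pauli (n : nat) := ('Z_4 * {ffun 'I_n -> bool} * {ffun 'I_n -> bool})%type.

Definition ph n (P : Pauli n) : 'Z_4 := P.1.1.
Definition xb n (P : Pauli n) : {ffun 'I_n -> bool} := P.1.2.
Definition zb n (P : Pauli n) : {ffun 'I_n -> bool} := P.2.

Inductive letter := LI | LX | LY | LZ.

Definition letter_at n (P : Pauli n) (i : 'I_n) : letter :=
  match xb P i, zb P i with
  | false, false => LI | true, false => LX | true, true => LY | false, true => LZ
  end.

Definition is_LI (l : letter) : bool := if l is LI then true else false.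

Definition nontrivial_on n (P : Pauli n) (i : 'I_n) : bool := ~~ is_LI (letter_at P i).

(* Product of Pauli strings: X^x Z^z X^x' Z^z' = (-1)^{z x'} X^{x+x'} Z^{z+z'} *)
Definition pmul n (P Q : Pauli n) : Pauli n :=
  (ph P + ph Q + (\sum_(i < n) ((zb P i && xb Q i) : nat)%:R) *+ 2,
   [ffun i => xb P i (+) xb Q i],
   [ffun i => zb P i (+) zb Q i]).

Definition pneg n (P : Pauli n) : Pauli n := (ph P + 2%:R, xb P, zb P).

Definition anticommute n (P Q : Pauli n) : bool := pmul P Q == pneg (pmul Q P).

Inductive gate (n : nat) :=
| Hgate of 'I_n
| Sgate of 'I_n
| CNOTgate of 'I_n & 'I_n. (* control, target *)

Definition valid_gate n (g : gate n) : bool :=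
  if g is CNOTgate c t then c != t else true.

Definition gate_conj n (g : gate n) (P : Pauli n) : Pauli n :=
  match g with
  | Hgate j => (* X -> Z, Z -> X *)
      (ph P + ((xb P j && zb P j) : nat)%:R *+ 2,
       [ffun i => if i == j then zb P i else xb P i],
       [ffun i => if i == j then xb P i else zb P i])
  | Sgate j => (* X -> Y = iXZ, Z -> Z *)
      (ph P + (xb P j : nat)%:R,
       xb P,
       [ffun i => if i == j then zb P i (+) xb P i else zb P i])
  | CNOTgate c t => (* X_c -> X_c X_t, Z_t -> Z_c Z_t *)
      (ph P,
       [ffun i => if i == t then xb P t (+) xb P c else xb P i],
       [ffun i => if i == c then zb P c (+) zb P t else zb P i])
  end.

(* A Clifford circuit is a sequence of valid gates [g1; ...; gm]
   (g1 applied first, unitary C = gm ... g1). *)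
Definition clifford_circuit n (C : seq (gate n)) : bool := all (@valid_gate n) C.

Definition circ_conj n (C : seq (gate n)) (P : Pauli n) : Pauli n :=
  foldl (fun Q g => gate_conj g Q) P C.

Definition acts_only_on n (P : Pauli n) (S : pred 'I_n) : Prop :=
  forall i, nontrivial_on P i -> S i.

(* Writing P = lambda tau (x) R with tau the factor on qubit q:
   R (the factor on the other qubits), represented as an n-qubit string with
   the identity on qubit q (and trivial phase). *)
Definition rest_factor n (q : 'I_n) (P : Pauli n) : Pauli n :=
  (0, [ffun i => if i == q then false else xb P i],
      [ffun i => if i == q then false else zb P i]).

Definition betab (ac bc ad bd : bool) : bool :=
  [&& (ac, bc) != (false, false), (ad, bd) != (false, false) & (ac, bc) != (ad, bd)].

(* Main.v *)
Require Import Defs.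
From mathcomp Require Import all_boot all_order all_algebra.
From mathcomp Require Import zify.
Set Implicit Arguments. Unset Strict Implicit. Unset Printing Implicit Defensive.
Import GRing.Theory.

Lemma z4 (a b : nat) : ((a%:R *+ 2 == b%:R *+ 2 + 2%:R :> 'Z_4)%R) = odd (a + b).
Proof.
have E : forall k : nat, (k%:R *+ 2 : 'Z_4)%R = (k * 2)%N%:R%R by move=> k; rewrite natrM mulr_natr.
rewrite !E -natrD -val_eqE /= !val_Zp_nat //.
have -> : odd (a+b) = ((a+b) %% 2 == 1)%N by rewrite modn2; case: odd.
apply/eqP/eqP => H; lia.
Qed.

Section S.
Variable n : nat.
Implicit Types P Q : Pauli n.

Definition tm P Q (i : 'I_n) := (zb P i && xb Q i) (+) (zb Q i && xb P i).
Definition omega P Q := \big[addb/false]_(i < n) tm P Q i.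

Lemma odd_sumb (f : 'I_n -> bool) : odd (\sum_(i < n) (f i : nat)) = \big[addb/false]_(i < n) f i.
Proof.
rewrite (big_morph odd oddD (erefl (odd 0))).
by apply: eq_bigr => i _; case: (f i).
Qed.

Lemma anticommute_omega P Q : anticommute P Q = omega P Q.
Proof.
rewrite /anticommute /pmul /pneg /= /omega.
have ex : [ffun i => xb P i (+) xb Q i] = [ffun i => xb Q i (+) xb P i].
  by apply/ffunP => i; rewrite !ffunE addbC.
have ez : [ffun i => zb P i (+) zb Q i] = [ffun i => zb Q i (+) zb P i].
  by apply/ffunP => i; rewrite !ffunE addbC.
rewrite ex ez !xpair_eqE !eqxx !andbT.
rewrite /tm big_split /= -!odd_sumb -oddD -z4.
rewrite [(ph Q + ph P)%R]addrC -!addrA.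
rewrite (inj_eq (addrI (ph P))) (inj_eq (addrI (ph Q))).
by rewrite !natr_sum.
Qed.

Lemma big_pair (f g : 'I_n -> bool) c t : c != t ->
  (forall i, i != c -> i != t -> f i = g i) -> f c (+) f t = g c (+) g t ->
  \big[addb/false]_i f i = \big[addb/false]_i g i.
Proof.
move=> ct H Hct.
rewrite (bigD1 c) // [in RHS](bigD1 c) //= (bigD1 t) /=; last by rewrite eq_sym ct.
rewrite [in RHS](bigD1 t) /=; last by rewrite eq_sym ct.
rewrite !addbA Hct; congr addb.
by apply: eq_bigr => i /andP [ic it]; apply: H.
Qed.

Lemma omega_gate (g : gate n) P Q : valid_gate g ->
  omega (gate_conj g P) (gate_conj g Q) = omega P Q.
Proof.
case: g => [j|j|c t] /= V.
- apply: eq_bigr => i _; rewrite /tm /= !ffunE; case: (i == j) => //.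
  by case: (xb P i); case: (zb P i); case: (xb Q i); case: (zb Q i).
- apply: eq_bigr => i _; rewrite /tm /= !ffunE; case: (i == j) => //.
  by case: (xb P i); case: (zb P i); case: (xb Q i); case: (zb Q i).
- symmetry; apply: (big_pair V).
  + by move=> i ic it; rewrite /tm /= !ffunE (negbTE ic) (negbTE it).
  + rewrite /tm /= !ffunE !eqxx (negbTE V) eq_sym (negbTE V).
    by case: (xb P c); case: (zb P c); case: (xb Q c); case: (zb Q c);
       case: (xb P t); case: (zb P t); case: (xb Q t); case: (zb Q t).
Qed.

Lemma omega_circ (C : seq (gate n)) P Q : clifford_circuit C ->
  omega (circ_conj C P) (circ_conj C Q) = omega P Q.
Proof.
elim: C P Q => [//|g C IH] P Q /andP [Vg VC].
by rewrite /circ_conj /= -/(circ_conj C _) -/(circ_conj C _) IH // omega_gate.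
Qed.


Lemma nontrivE P i : nontrivial_on P i = xb P i || zb P i.
Proof. by rewrite /nontrivial_on /letter_at; case: (xb P i); case: (zb P i). Qed.

Lemma acts_onlyP P (S : pred 'I_n) :
  (forall i, ~~ S i -> xb P i = false /\ zb P i = false) -> acts_only_on P S.
Proof.
move=> H i; rewrite nontrivE; apply: contraTT => /H [-> ->] //.
Qed.

Lemma acts_only1 P q : acts_only_on P (pred1 q) ->
  forall i, i != q -> xb P i = false /\ zb P i = false.
Proof.
move=> H i iq; move: (H i); rewrite nontrivE /= (negbTE iq).
by case: (xb P i); case: (zb P i) => // /(_ isT).
Qed.

Lemma omegaC P Q : omega P Q = omega Q P.
Proof. by apply: eq_bigr => i _; rewrite /tm addbC. Qed.

Lemma omega_single P Q p : (forall i, i != p -> xb P i = false /\ zb P i = false) ->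
  omega P Q = tm P Q p.
Proof.
move=> H; rewrite /omega (bigD1 p) //= big1 ?addbF // => i /H [].
by rewrite /tm => -> ->; rewrite andbF.
Qed.

Lemma omega_split P Q q :
  omega P Q = tm P Q q (+) omega (rest_factor q P) (rest_factor q Q).
Proof.
rewrite /omega (bigD1 q) //= [in RHS](bigD1 q) //=.
have -> : tm (rest_factor q P) (rest_factor q Q) q = false by rewrite /tm /= !ffunE eqxx.
rewrite addFb.
congr addb; apply: eq_bigr => i /negbTE iq.
by rewrite /tm /= !ffunE iq.
Qed.

Lemma beta_bool (xa za xb' zb' xc zc xd zd : bool) :
  (za && xb') (+) (zb' && xa) ->
  (zc && xd) (+) (zd && xc) =
  betab ((za && xc) (+) (zc && xa)) ((zb' && xc) (+) (zc && xb'))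
        ((za && xd) (+) (zd && xa)) ((zb' && xd) (+) (zd && xb')).
Proof.
by case: xa; case: za; case: xb'; case: zb'; case: xc; case: zc; case: xd; case: zd.
Qed.


Definition avoids (q : 'I_n) (g : gate n) : bool :=
  match g with
  | Hgate j => j != q | Sgate j => j != q
  | CNOTgate c t => (c != q) && (t != q) end.
Definition good q g := valid_gate g && avoids q g.

Lemma rest_gate q g P : avoids q g ->
  xb (rest_factor q (gate_conj g P)) = xb (gate_conj g (rest_factor q P)) /\
  zb (rest_factor q (gate_conj g P)) = zb (gate_conj g (rest_factor q P)).
Proof.
case: g => [j|j|c t] /= A; split; apply/ffunP => i; rewrite !ffunE /=.
all: rewrite ?ffunE.
all: try (case/andP: A => A1 A2).
all: case: (eqVneq i q) => [E|iq]; [subst i; rewrite ?eqxx //= | rewrite ?(negbTE iq) //=].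
all: try by rewrite eq_sym ?(negbTE A) ?(negbTE A1) ?(negbTE A2).
all: try by rewrite ?(negbTE A1) ?(negbTE A2).
all: try by case: (i == j).
Qed.

Lemma omega_ext P P' Q Q' : xb P = xb P' -> zb P = zb P' -> xb Q = xb Q' -> zb Q = zb Q' ->
  omega P Q = omega P' Q'.
Proof. by rewrite /omega /tm => -> -> -> ->. Qed.

Lemma circ_cons g C P : circ_conj (g :: C) P = circ_conj C (gate_conj g P).
Proof. by []. Qed.

Lemma circ_cat C1 C2 P : circ_conj (C1 ++ C2) P = circ_conj C2 (circ_conj C1 P).
Proof. by rewrite /circ_conj foldl_cat. Qed.

Lemma omega_rest_circ q C P Q : all (good q) C ->
  omega (rest_factor q (circ_conj C P)) (rest_factor q (circ_conj C Q)) =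
  omega (rest_factor q P) (rest_factor q Q).
Proof.
elim: C P Q => [//|g C IH] P Q /andP [/andP [V A] GC].
rewrite !circ_cons IH //.
have [h1 h2] := rest_gate P A; have [h3 h4] := rest_gate Q A.
by rewrite (omega_ext h1 h2 h3 h4) omega_gate.
Qed.

Definition zero_off (S : pred 'I_n) P := forall i, ~~ S i -> xb P i = false /\ zb P i = false.

Lemma zero_off_gate q g P : avoids q g -> zero_off (pred1 q) P -> zero_off (pred1 q) (gate_conj g P).
Proof.
move=> A Z i iq; have [x z] := Z i iq.
case: g A => [j|j|c t] /= A; rewrite !ffunE.
- by case: (i == j); rewrite ?x ?z.
- by case: (i == j); rewrite ?x ?z.
- case/andP: A => A1 A2; split.
  + case: (eqVneq i t) => [it|_]; last by [].
    subst i; have [x' _] := Z c A1; by rewrite x x'.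
  + case: (eqVneq i c) => [ic|_]; last by [].
    subst i; have [_ z'] := Z t A2; by rewrite z z'.
Qed.

Lemma zero_off_circ q C P : all (good q) C -> zero_off (pred1 q) P ->
  zero_off (pred1 q) (circ_conj C P).
Proof.
elim: C P => [//|g C IH] P /andP [/andP [V A] GC] Z.
by rewrite circ_cons; apply: IH => //; apply: zero_off_gate.
Qed.

Definition app2 C (S : Pauli n * Pauli n) := (circ_conj C S.1, circ_conj C S.2).

Lemma app2_cat C1 C2 S : app2 (C1 ++ C2) S = app2 C2 (app2 C1 S).
Proof. by rewrite /app2 !circ_cat. Qed.
Lemma app2_nil S : app2 [::] S = S.
Proof. by case: S. Qed.

Lemma iter_steps (gd : pred (gate n)) (Inv : Pauli n * Pauli n -> Prop)
  (Done : 'I_n -> Pauli n * Pauli n -> Prop) (ok : pred 'I_n) :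
  (forall S j, ok j -> Inv S -> exists C, [/\ all gd C, Inv (app2 C S), Done j (app2 C S) &
      forall i, ok i -> i != j -> Done i S -> Done i (app2 C S)]) ->
  forall s S, all ok s -> Inv S ->
  exists C, [/\ all gd C, Inv (app2 C S) & forall i, i \in s -> Done i (app2 C S)].
Proof.
move=> step; elim=> [|j s IH] S.
  by move=> _ I; exists [::]; rewrite app2_nil; split.
move=> /= /andP [okj oks] I.
have [C1 [g1 I1 D1]] := IH S oks I.
have [C2 [g2 I2 D2 P2]] := step _ _ okj I1.
exists (C1 ++ C2); rewrite app2_cat; split.
- by rewrite all_cat g1 g2.
- by [].
- move=> i; rewrite inE => /orP [/eqP -> //|iS].
  case: (eqVneq i j) => [-> //|ij].
  by apply: P2 => //; [apply: (allP oks) | apply: D1].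
Qed.


Lemma xbH j P i : xb (gate_conj (Hgate j) P) i = if i == j then zb P i else xb P i.
Proof. by rewrite /= ffunE. Qed.
Lemma zbH j P i : zb (gate_conj (Hgate j) P) i = if i == j then xb P i else zb P i.
Proof. by rewrite /= ffunE. Qed.
Lemma xbS j P i : xb (gate_conj (Sgate j) P) i = xb P i.
Proof. by []. Qed.
Lemma zbS j P i : zb (gate_conj (Sgate j) P) i = if i == j then zb P i (+) xb P i else zb P i.
Proof. by rewrite /= ffunE. Qed.
Lemma xbC c t P i : xb (gate_conj (CNOTgate c t) P) i = if i == t then xb P t (+) xb P c else xb P i.
Proof. by rewrite /= ffunE. Qed.
Lemma zbC c t P i : zb (gate_conj (CNOTgate c t) P) i = if i == c then zb P c (+) zb P t else zb P i.
Proof. by rewrite /= ffunE. Qed.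
Lemma app2_1 g S : app2 [:: g] S = (gate_conj g S.1, gate_conj g S.2).
Proof. by []. Qed.

Lemma app2_2 g S : (app2 [:: g] S).2 = gate_conj g S.2.
Proof. by []. Qed.

Section Phases.
Variable q : 'I_n.

Lemma phaseA S : exists C, [/\ all (good q) C, True &
  forall i, i \in enum (fun j => j != q) -> zb (app2 C S).1 i = false].
Proof.
apply: (iter_steps (Inv := fun _ => True) (Done := fun j S => zb S.1 j = false)
          (ok := fun j => j != q)); last by [].
- move=> {}S j jq _.
  case Ex: (xb S.1 j); case Ez: (zb S.1 j).
  + exists [:: Sgate j]; rewrite app2_1 /=; split => //.
    * by rewrite /good /= jq.
    * by rewrite zbS eqxx Ex Ez.
    * by move=> i _ ij; rewrite zbS (negbTE ij).
  + by exists [::]; rewrite app2_nil; split.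
  + exists [:: Hgate j]; rewrite app2_1 /=; split => //.
    * by rewrite /good /= jq.
    * by rewrite zbH eqxx Ex.
    * by move=> i _ ij; rewrite zbH (negbTE ij).
  + by exists [::]; rewrite app2_nil; split.
- by apply/allP => i; rewrite mem_enum.
Qed.


Lemma phaseB p S : p != q -> (forall i, i != q -> zb S.1 i = false) -> xb S.1 p ->
  exists C, [/\ all (good q) C,
     (forall i, i != q -> zb (app2 C S).1 i = false) /\ xb (app2 C S).1 p &
     forall i, i \in enum (fun j => (j != q) && (j != p)) -> xb (app2 C S).1 i = false].
Proof.
move=> pq Hz Hx.
apply: (iter_steps (Inv := fun S => (forall i, i != q -> zb S.1 i = false) /\ xb S.1 p)
          (Done := fun j S => xb S.1 j = false)
          (ok := fun j => (j != q) && (j != p))); last by split.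
- move=> S0 j /andP [jq jp] [Iz Ix].
  case Ex: (xb S0.1 j); last by exists [::]; rewrite app2_nil; split.
  exists [:: CNOTgate p j]; rewrite app2_1 /=; split => //.
  + by rewrite /good /= eq_sym jp pq jq.
  + split.
    * move=> i iq; rewrite zbC; case: (eqVneq i p) => [E|_]; last by apply: Iz.
      by subst i; rewrite Iz // Iz.
    * by rewrite xbC eq_sym (negbTE jp).
  + by rewrite xbC eqxx Ex Ix.
  + by move=> i _ ij; rewrite xbC (negbTE ij).
- by apply/allP => i; rewrite mem_enum.
Qed.

Lemma stepC_cnot p j S : j != q -> j != p -> p != q ->
  (forall i, i != q -> zb S.1 i = false) -> xb S.1 p ->
  (forall i, i != q -> i != p -> xb S.1 i = false) -> zb S.2 p ->
  xb S.2 j = false -> zb S.2 j = true ->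
  let S' := app2 [:: CNOTgate j p] S in
  [/\ all (good q) [:: CNOTgate j p],
      [/\ (forall i, i != q -> zb S'.1 i = false), xb S'.1 p,
          (forall i, i != q -> i != p -> xb S'.1 i = false) & zb S'.2 p],
      xb S'.2 j = false /\ zb S'.2 j = false &
      forall i, i != j -> i != p -> xb S'.2 i = xb S.2 i /\ zb S'.2 i = zb S.2 i].
Proof.
move=> jq jp pq Iz Ix Ix2 Iq Qx Qz S'; rewrite /S' app2_1 /=; split.
- by rewrite /good /= jp jq pq.
- split.
  + move=> i iq; rewrite zbC; case: (eqVneq i j) => [E|_]; last by apply: Iz.
    by subst i; rewrite !Iz.
  + by rewrite xbC eqxx Ix Ix2.
  + by move=> i iq ip; rewrite xbC (negbTE ip) Ix2.
  + by rewrite zbC eq_sym (negbTE jp).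
- by rewrite xbC zbC (negbTE jp) eqxx Qx Qz Iq.
- by move=> i ij ip; rewrite xbC zbC (negbTE ij) (negbTE ip).
Qed.


Definition InvC p S := [/\ (forall i, i != q -> zb S.1 i = false), xb S.1 p,
   (forall i, i != q -> i != p -> xb S.1 i = false) & zb S.2 p].

Lemma localH p j S : j != q -> j != p -> InvC p S ->
  InvC p (app2 [:: Hgate j] S) /\
  forall i, i != j -> xb (app2 [:: Hgate j] S).2 i = xb S.2 i /\ zb (app2 [:: Hgate j] S).2 i = zb S.2 i.
Proof.
move=> jq jp [Iz Ix Ix2 Iq]; rewrite app2_1 /=; split.
- split.
  + move=> i iq; rewrite zbH; case: (eqVneq i j) => [E|_]; last by apply: Iz.
    by subst i; rewrite Ix2.
  + by rewrite xbH eq_sym (negbTE jp).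
  + move=> i iq ip; rewrite xbH; case: (eqVneq i j) => [E|_]; last by apply: Ix2.
    by subst i; rewrite Iz.
  + by rewrite zbH eq_sym (negbTE jp).
- by move=> i ij; rewrite xbH zbH (negbTE ij).
Qed.

Lemma localS p j S : j != q -> j != p -> InvC p S ->
  InvC p (app2 [:: Sgate j] S) /\
  forall i, i != j -> xb (app2 [:: Sgate j] S).2 i = xb S.2 i /\ zb (app2 [:: Sgate j] S).2 i = zb S.2 i.
Proof.
move=> jq jp [Iz Ix Ix2 Iq]; rewrite app2_1 /=; split.
- split.
  + move=> i iq; rewrite zbS; case: (eqVneq i j) => [E|_]; last by apply: Iz.
    by subst i; rewrite Ix2 // Iz.
  + by rewrite xbS.
  + by move=> i iq ip; rewrite xbS Ix2.
  + by rewrite zbS eq_sym (negbTE jp).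
- by move=> i ij; rewrite xbS zbS (negbTE ij).
Qed.

Lemma prepC p j S : j != q -> j != p -> InvC p S -> exists C,
  [/\ all (good q) C, InvC p (app2 C S),
      xb (app2 C S).2 j = false /\ zb (app2 C S).2 j = (xb S.2 j || zb S.2 j) &
      forall i, i != j -> xb (app2 C S).2 i = xb S.2 i /\ zb (app2 C S).2 i = zb S.2 i].
Proof.
move=> jq jp I.
case Ex: (xb S.2 j); last first.
  by exists [::]; rewrite app2_nil Ex; split.
case Ez: (zb S.2 j).
- have [I1 O1] := localS jq jp I.
  have [I2 O2] := localH jq jp I1.
  exists ([:: Sgate j] ++ [:: Hgate j]); rewrite app2_cat; split => //.
  + by rewrite /= /good /= jq.
  + by rewrite !app2_2 xbH zbH xbS zbS eqxx Ex Ez.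
  + move=> i ij; have [a b] := O1 i ij; have [c d] := O2 i ij.
    by rewrite c d a b.
- have [I1 O1] := localH jq jp I.
  exists [:: Hgate j]; split => //.
  + by rewrite /= /good /= jq.
  + by rewrite app2_1 /= xbH zbH eqxx Ex Ez.
Qed.

Lemma phaseC p S : p != q -> InvC p S -> exists C, [/\ all (good q) C, InvC p (app2 C S) &
  forall i, i \in enum (fun j => (j != q) && (j != p)) ->
    xb (app2 C S).2 i = false /\ zb (app2 C S).2 i = false].
Proof.
move=> pq I.
apply: (iter_steps (Inv := InvC p)
          (Done := fun j S => xb S.2 j = false /\ zb S.2 j = false)
          (ok := fun j => (j != q) && (j != p))); last by [].
- move=> S0 j /andP [jq jp] I0.
  have [C1 [g1 I1 [x1 z1] O1]] := prepC jq jp I0.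
  case Ez: (xb S0.2 j || zb S0.2 j); last first.
    exists C1; split => //; first by rewrite z1 Ez.
    by move=> i _ ij; have [a b] := O1 i ij; rewrite a b.
  case: I1 => Iz Ix Ix2 Iq.
  have [gC [Jz Jx Jx2 Jq] [x2 z2] O2] :=
    stepC_cnot jq jp pq Iz Ix Ix2 Iq x1 (etrans z1 Ez).
  exists (C1 ++ [:: CNOTgate j p]); rewrite app2_cat; split => //.
  + by rewrite all_cat g1 gC.
  + move=> i /andP [iq ip] ij; have [a b] := O1 i ij; have [c d] := O2 i ij ip.
    by rewrite c d a b.
- by apply/allP => i; rewrite mem_enum.
Qed.

End Phases.
End S.

Lemma good_valid n q (C : seq (gate n)) : all (good q) C -> clifford_circuit C.
Proof. by apply: sub_all => g /andP []. Qed.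

Theorem mainTheorem5 (n : nat) (Hn : 1 < n) (Pa Pb Pc Pd : Pauli n)
  (Hab : anticommute Pa Pb)
  (C' : seq (gate n)) (q : 'I_n)
  (HC' : clifford_circuit C')
  (Ha : acts_only_on (circ_conj C' Pa) (pred1 q))
  (Hb : acts_only_on (circ_conj C' Pb) (pred1 q)) :
  let beta := betab (anticommute Pa Pc) (anticommute Pb Pc)
                    (anticommute Pa Pd) (anticommute Pb Pd) in
  (anticommute (rest_factor q (circ_conj C' Pc)) (rest_factor q (circ_conj C' Pd))
     = addb (anticommute Pc Pd) beta)
  /\
  (anticommute (rest_factor q (circ_conj C' Pc)) (rest_factor q (circ_conj C' Pd)) ->
   exists (C : seq (gate n)) (q1 q2 : 'I_n),
     [/\ clifford_circuit C /\ q1 != q2,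
         acts_only_on (circ_conj C Pa) (pred2 q1 q2),
         acts_only_on (circ_conj C Pb) (pred2 q1 q2),
         acts_only_on (circ_conj C Pc) (pred2 q1 q2) &
         acts_only_on (circ_conj C Pd) (pred2 q1 q2)]).
Proof.
move=> beta.
have key X Y : anticommute X Y = omega (circ_conj C' X) (circ_conj C' Y).
  by rewrite anticommute_omega omega_circ.
set A := circ_conj C' Pa; set B := circ_conj C' Pb.
set c := circ_conj C' Pc; set d := circ_conj C' Pd.
have ZA := acts_only1 Ha; have ZB := acts_only1 Hb.
split.
  rewrite anticommute_omega /beta !key -/A -/B -/c -/d.
  rewrite !(omega_single _ ZA) !(omega_single _ ZB).
  have hab : tm A B q by rewrite -(omega_single _ ZA) -key.
  move: hab; rewrite /tm => hab; rewrite -(@beta_bool _ _ _ _ _ _ _ _ hab).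
  rewrite (omega_split c d q) /tm.
  by case: (omega (rest_factor q c) (rest_factor q d)); case: (zb c q && xb d q (+) zb d q && xb c q).
rewrite anticommute_omega => Hom.
pose S0 := (c, d).
have [C1 [g1 _ D1]] := phaseA q S0.
set S1 := app2 C1 S0.
have om1 : omega (rest_factor q S1.1) (rest_factor q S1.2).
  by rewrite /S1 /app2 /= (omega_rest_circ _ _ g1).
have [p /andP [pq xp]] : exists p, (p != q) && xb S1.1 p.
  case: (pickP (fun p => (p != q) && xb S1.1 p)) => [p Hp|N]; first by exists p.
  move: om1; rewrite /omega big1 // => i _; rewrite /tm /= !ffunE.
  case: (eqVneq i q) => [//|iq] /=.
  have X : xb S1.1 i = false.
    apply/negP => Hx; move: (N i) => /=; rewrite Hx andbT => /negbT /negPn /eqP E.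
    by rewrite E eqxx in iq.
  have Z : zb S1.1 i = false by apply: D1; rewrite mem_enum.
  by move: X Z; rewrite /S1 /app2 /= => -> ->; rewrite !andbF.
have D1' : forall i, i != q -> zb S1.1 i = false by move=> i iq; apply: D1; rewrite mem_enum.
have [C2 [g2 [Iz2 Ix2] D2]] := phaseB pq D1' xp.
set S2 := app2 C2 S1.
have om2 : omega (rest_factor q S2.1) (rest_factor q S2.2).
  by rewrite /S2 /S1 /app2 /= (omega_rest_circ _ _ g2) (omega_rest_circ _ _ g1).
have zp : zb S2.2 p.
  move: om2; rewrite (omega_single _ (p := p)) /tm /= ?ffunE ?(negbTE pq) ?Iz2 ?Ix2 //=.
    by rewrite andbT.
  move=> i ip; rewrite !ffunE; case: (eqVneq i q) => [//|iq].
  by rewrite Iz2 // D2 //; rewrite mem_enum; apply/andP.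
have I2 : InvC q p S2.
  split => //; move=> i iq ip; by rewrite D2 //; rewrite mem_enum; apply/andP.
have [C3 [g3 [Iz3 Ix3 Ix23 _] D3]] := phaseC pq I2.
exists (C' ++ (C1 ++ C2 ++ C3)), q, p.
have E P : circ_conj (C' ++ (C1 ++ C2 ++ C3)) P = circ_conj (C1 ++ C2 ++ C3) (circ_conj C' P).
  by rewrite circ_cat.
have G : all (good q) (C1 ++ C2 ++ C3) by rewrite !all_cat g1 g2 g3.
have E3 : app2 (C1 ++ C2 ++ C3) S0 = app2 C3 S2 by rewrite !app2_cat.
split.
- split; last by rewrite eq_sym.
  rewrite /clifford_circuit all_cat; apply/andP; split; [exact: HC' | exact: (good_valid G)].
- rewrite E -/A; apply: acts_onlyP => i /norP [iq _].
  exact: (zero_off_circ G (fun j jq => ZA j jq)).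
- rewrite E -/B; apply: acts_onlyP => i /norP [iq _].
  exact: (zero_off_circ G (fun j jq => ZB j jq)).
- rewrite E -/c; apply: acts_onlyP => i /norP [iq ip].
  have -> : circ_conj (C1 ++ C2 ++ C3) c = (app2 (C1 ++ C2 ++ C3) S0).1 by [].
  by rewrite E3 Iz3 // Ix23.
- rewrite E -/d; apply: acts_onlyP => i /norP [iq ip].
  have -> : circ_conj (C1 ++ C2 ++ C3) d = (app2 (C1 ++ C2 ++ C3) S0).2 by [].
  by rewrite E3; apply: D3; rewrite mem_enum; apply/andP.
Qed.
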